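(* Fix $n\ge1$ and $\kappa>0$. Let $\mho:\mathcal A_n^*\to(\mathrm{Mat}_n(\mathbb T),\odot)$ be the monoid homomorphism with $\mho(e)=E$ and $\mho(a_\ell)=A^{(\ell)}$ for $\ell=1,\dots,n$. Then for all $u,v\in\mathcal A_n^*$, $$u\equiv_{\mathrm{clk}}v\iff \mho(u)=\mho(v).$$ Hence $\mho$ induces a monoid isomorphism from the cloaktic monoid $\mathcal K_n=\mathcal A_n^*/{\equiv_{\mathrm{clk}}}$ onto the submonoid of $(\mathrm{Mat}_n(\mathbb T),\odot)$ generated by $A^{(1)},\dots,A^{(n)}$ (with identity $E$).
   Context: $\mathcal A_n=\{a_1<\cdots<a_n\}$, $e$ the empty word. Tropical semiring $\mathbb T=\mathbb R\cup\{-\infty\}$, $\oplus=\max$, $\odot=+$; $(A\odot B)_{i,j}=\max_t(a_{i,t}+b_{t,j})$. $A^{(\ell)}_{i,j}=\kappa$ if $i\le\ell\le j$, $=0$ if $i\le j$ but not $i\le\ell\le j$, $=-\infty$ if $i>j$; $E_{i,j}=0$ for $i\le j$, $-\infty$ for $i>j$. A subword is a not necessarily contiguous subsequence. For $w\in\mathcal A_n^*$ and $1\le i\le j\le n$, $L_{[i,j]}(w)$ is the maximal length of a nondecreasing subword of $w$ with all letters in $\{a_i,\dots,a_j\}$ ($0$ if none); $u\equiv_{\mathrm{clk}}v$ iff $L_{[i,j]}(u)=L_{[i,j]}(v)$ for all $1\le i\le j\le n$. *)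

(* Defs.v *)
From HB Require Import structures.
From mathcomp Require Import all_boot all_order all_algebra.
Set Implicit Arguments. Unset Strict Implicit. Unset Printing Implicit Defensive.
Import Order.TTheory GRing.Theory Num.Theory.

(* Tropical semiring T = R u {-oo} over an ordered field R:
   None = -oo, Some x = x; (+) = max, (.) = +. *)
Section Trop.
Variable R : realFieldType.

Definition trop := option R.

Definition tplus (x y : trop) : trop :=
  match x, y with
  | None, _ => y
  | _, None => x
  | Some a, Some b => Some (Num.max a b)
  end.

Definition ttimes (x y : trop) : trop :=
  match x, y with
  | Some a, Some b => Some (a + b)%R
  | _, _ => None
  end.

Definition tmul (n : nat) (A B : 'M[trop]_n) : 'M[trop]_n :=
  \matrix_(i < n, j < n) \big[tplus/None]_(t < n) ttimes (A i t) (B t j).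

Definition Etrop (n : nat) : 'M[trop]_n :=
  \matrix_(i < n, j < n) if (i <= j)%N then Some 0%R else None.

(* A^(l): letters a_1 < ... < a_n are encoded as ordinals 0 < ... < n-1 *)
Definition Agen (n : nat) (kappa : R) (l : 'I_n) : 'M[trop]_n :=
  \matrix_(i < n, j < n)
    if (i <= j)%N then (if (i <= l <= j)%N then Some kappa else Some 0%R)
    else None.

Definition mho (n : nat) (kappa : R) (w : seq 'I_n) : 'M[trop]_n :=
  foldr (fun a M => tmul (Agen kappa a) M) (Etrop n) w.

End Trop.

Definition Lint (n : nat) (i j : 'I_n) (w : seq 'I_n) : nat :=
  \max_(m : (size w).-tuple bool |
          sorted (fun a b : 'I_n => (a <= b)%N) (mask m w)
          && all (fun a : 'I_n => (i <= a <= j)%N) (mask m w))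
    size (mask m w).

Definition clk (n : nat) (u v : seq 'I_n) : Prop :=
  forall i j : 'I_n, (i <= j)%N -> Lint i j u = Lint i j v.

(* Main.v *)
Require Import Defs.
From HB Require Import structures.
From mathcomp Require Import all_boot all_order all_algebra.
Import Order.TTheory GRing.Theory Num.Theory.
Set Implicit Arguments. Unset Strict Implicit.

Section L.
Variable n : nat.
Definition ole : rel 'I_n := fun a b => (a <= b)%N.
Lemma ole_trans : transitive ole.
Proof. by move=> b a c; rewrite /ole; apply: leq_trans. Qed.

Definition inr (t j : nat) : pred 'I_n := fun a => (t <= a <= j)%N.

Fixpoint Lr (t j : nat) (w : seq 'I_n) : nat :=
  match w with
  | [::] => 0
  | a :: w' => maxn (Lr t j w') (if (t <= a <= j)%N then (Lr a j w').+1 else 0)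
  end.

Lemma Lr_mono (w : seq 'I_n) (t s j : nat) : (t <= s)%N -> (Lr s j w <= Lr t j w)%N.
Proof.
elim: w t s => [|a w IH] t s ts //=.
rewrite geq_max; apply/andP; split.
  by rewrite leq_max IH.
case: ifP => // /andP [sa aj].
by rewrite leq_max (leq_trans ts sa) aj ltnSn orbT.
Qed.

Lemma all_inr_up (s : seq 'I_n) (x : 'I_n) (t j : nat) :
  all (ole x) s -> all (inr t j) s -> all (inr x j) s.
Proof.
elim: s => //= y s IHs /andP [xy hs] /andP [hy hs'].
rewrite IHs // andbT.
by move: xy hy; rewrite /ole /inr => -> /andP [_ ->].
Qed.

Lemma Lr_ub (w s : seq 'I_n) (t j : nat) :
  subseq s w -> sorted ole s -> all (inr t j) s -> (size s <= Lr t j w)%N.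
Proof.
elim: w s t => [|a w IH] s t.
  by case: s.
case: s => [|x s] //= sub srt al.
move: sub; case: eqP => [<- | _] sub.
  have al' : all (inr x j) s.
    apply: (@all_inr_up s x t j (order_path_min ole_trans srt)).
    by case/andP: al.
  move: al => /andP [hx _]; rewrite /inr /= in hx; rewrite hx.
  rewrite leq_max ltnS IH ?orbT //.
  exact: path_sorted srt.
rewrite leq_max (IH (x :: s)) //.
Qed.

Lemma Lr_wit (w : seq 'I_n) (t j : nat) :
  exists2 s, subseq s w & [/\ sorted ole s, all (inr t j) s & size s = Lr t j w].
Proof.
elim: w t => [|a w IH] t.
  by exists [::].
rewrite [Lr t j (a :: w)]/=; case: (leqP (if (t <= a <= j)%N then (Lr a j w).+1 else 0) (Lr t j w)) => h.
  have [s sub [h1 h2 h3]] := IH t.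
  exists s; first exact: (subseq_trans sub (subseq_cons w a)).
  by [].
have taj : (t <= a <= j)%N by move: h; case: ifP.
rewrite taj.
have [s sub [h1 h2 h3]] := IH a.
exists (a :: s); first by rewrite /= eqxx.
split => //=; last by rewrite h3.
  rewrite path_min_sorted //.
  by apply/allP => y /(allP h2) /andP [].
rewrite {1}/inr taj /=.
apply/allP => y /(allP h2) /andP [ay yj].
by rewrite /inr yj (leq_trans _ ay) //; case/andP: taj.
Qed.

Lemma Lint_Lr (i j : 'I_n) (w : seq 'I_n) : Lint i j w = Lr i j w.
Proof.
apply/eqP; rewrite eqn_leq; apply/andP; split.
  apply/bigmax_leqP => m /andP [h1 h2].
  by apply: Lr_ub => //; apply: mask_subseq.
have [s sub [h1 h2 h3]] := Lr_wit w i j.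
rewrite -h3.
have [m sz es] := subseqP sub.
rewrite es in h1 h2 *.
have szt : size m == size w by rewrite sz.
pose mt := Tuple szt.
have -> : m = val mt by [].
apply: (leq_bigmax_cond mt).
by rewrite -/(mask (val mt) w) /= h2 andbT; exact: h1.
Qed.
End L.
Section T.
Variable R : realFieldType.
Local Notation T := (trop R).

Lemma tplusA : associative (@tplus R).
Proof. by case=> [a|] [b|] [c|] //=; rewrite maxA. Qed.
Lemma tplusC : commutative (@tplus R).
Proof. by case=> [a|] [b|] //=; rewrite maxC. Qed.
Lemma tplus0 : left_id None (@tplus R).
Proof. by case. Qed.

HB.instance Definition _ := Monoid.isComLaw.Build T None (@tplus R) tplusA tplusC tplus0.

Lemma tdistl (x y z : T) : ttimes x (tplus y z) = tplus (ttimes x y) (ttimes x z).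
Proof.
case: x y z => [a|] [b|] [c|] //=; congr Some.
case: (lerP b c) => h.
  by rewrite max_r // lerD2l.
by rewrite max_l // lerD2l ltW.
Qed.

Lemma tdistr (x y z : T) : ttimes (tplus y z) x = tplus (ttimes y x) (ttimes z x).
Proof.
case: x y z => [a|] [b|] [c|] //=; congr Some.
case: (lerP b c) => h.
  by rewrite max_r // lerD2r.
by rewrite max_l // lerD2r ltW.
Qed.

Lemma ttimes0 (x : T) : ttimes x None = None.
Proof. by case: x. Qed.

Lemma ttimesA : associative (@ttimes R).
Proof. by case=> [a|] [b|] [c|] //=; rewrite addrA. Qed.

Lemma tmulA (n : nat) (A B C : 'M[T]_n) : tmul A (tmul B C) = tmul (tmul A B) C.
Proof.
apply/matrixP => i j; rewrite !mxE.
transitivity (\big[@tplus R/None]_(s < n) \big[@tplus R/None]_(t < n) ttimes (A i s) (ttimes (B s t) (C t j))).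
  apply: eq_bigr => s _; rewrite mxE.
  by rewrite (big_morph (ttimes (A i s)) (tdistl (A i s)) (ttimes0 (A i s))).
rewrite exchange_big /=.
apply: eq_bigr => t _; rewrite mxE.
rewrite (big_morph (fun y => ttimes y (C t j)) (tdistr (C t j)) (erefl : ttimes None (C t j) = None)).
by apply: eq_bigr => s _; rewrite ttimesA.
Qed.

Definition tle (x : R) (o : T) := if o is Some y then (y <= x)%R else true.

Lemma big_tle (n : nat) (F : 'I_n -> T) (x : R) :
  (forall s, tle x (F s)) -> tle x (\big[@tplus R/None]_(s < n) F s).
Proof.
move=> h; apply: (big_ind (tle x)) => //.
case=> [a|] [b|] //= ha hb; by rewrite ge_max ha hb.
Qed.

Lemma big_tnone (n : nat) (F : 'I_n -> T) :
  (forall s, F s = None) -> \big[@tplus R/None]_(s < n) F s = None.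
Proof. by move=> h; rewrite big1. Qed.

Lemma big_tmax (n : nat) (F : 'I_n -> T) (x : R) (s0 : 'I_n) :
  (forall s, tle x (F s)) -> F s0 = Some x -> \big[@tplus R/None]_(s < n) F s = Some x.
Proof.
move=> h e; rewrite (bigD1 s0) //= e.
have : tle x (\big[@tplus R/None]_(s < n | s != s0) F s).
  by apply: (big_ind (tle x)) => //; case=> [a|] [b|] //= ha hb; rewrite ge_max ha hb.
by case: (\big[_/_]_(_ < _ | _) _) => [b|] //= hb; rewrite max_l.
Qed.

End T.

Section M.
Variable R : realFieldType.
Variable n : nat.
Variable kappa : R.
Hypothesis hk : (0 < kappa)%R.

Definition rep (w : seq 'I_n) : 'M[trop R]_n :=
  \matrix_(t < n, j < n) if (t <= j)%N then Some (kappa *+ Lr t j w)%R else None.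

Lemma nat_le (a b : nat) : (a <= b)%N -> (kappa *+ a <= kappa *+ b)%R.
Proof. by move=> h; rewrite ler_pMn2l. Qed.

Lemma mho_rep (w : seq 'I_n) : mho kappa w = rep w.
Proof.
elim: w => [|a w IH].
  by apply/matrixP => t j; rewrite !mxE /=.
have -> : mho kappa (a :: w) = tmul (Agen kappa a) (mho kappa w) by [].
rewrite IH.
apply/matrixP => t j; rewrite !mxE.
case: (leqP t j) => tj; last first.
  apply: big_tnone => s; rewrite !mxE.
  case: (leqP t s) => ts //; case: (leqP s j) => sj; last by rewrite ttimes0.
  by move: (leq_trans ts sj); rewrite leqNgt tj.
have ub : forall s, tle (kappa *+ Lr t j (a :: w))%R
   (ttimes (Agen kappa a t s) (rep w s j)).
  move=> s; rewrite !mxE.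
  case: (leqP t s) => ts //; case: (leqP s j) => sj; last by rewrite ttimes0.
  rewrite [Lr t j (a :: w)]/=.
  case: (boolP (t <= a <= s)%N) => tas /=.
    case/andP: tas => ta asj; rewrite ta (leq_trans asj sj) /=.
    rewrite -mulrS; apply: nat_le.
    by rewrite leq_max ltnS Lr_mono ?orbT.
  rewrite add0r; apply: nat_le; rewrite leq_max.
  by rewrite Lr_mono.
rewrite [Lr t j (a :: w)]/= in ub *.
move: ub; case: (leqP (if (t <= a <= j)%N then (Lr a j w).+1 else 0) (Lr t j w)) => h ub.
  apply: (big_tmax ub (s0 := t)); rewrite !mxE leqnn tj /=.
  case: ifP => taa; last by rewrite /= add0r.
  have eta : nat_of_ord a = nat_of_ord t by apply/eqP; rewrite eqn_leq andbC.
  by move: h; rewrite eta leqnn tj ltnn.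
have taj : (t <= a <= j)%N by move: h; case: ifP.
rewrite taj in ub *.
apply: (big_tmax ub (s0 := a)); rewrite !mxE.
case/andP: taj => ta aj.
by rewrite ta aj leqnn /= mulrS.
Qed.

Lemma E_left (w : seq 'I_n) : tmul (Etrop R n) (rep w) = rep w.
Proof.
apply/matrixP => t j; rewrite !mxE.
case: (leqP t j) => tj; last first.
  apply: big_tnone => s; rewrite !mxE.
  case: (leqP t s) => ts //; case: (leqP s j) => sj; last by rewrite ttimes0.
  by move: (leq_trans ts sj); rewrite leqNgt tj.
apply: (big_tmax (s0 := t)); last by rewrite !mxE leqnn tj /= add0r.
move=> s; rewrite !mxE.
case: (leqP t s) => ts //; case: (leqP s j) => sj /=; last by rewrite ?ttimes0.
by rewrite add0r nat_le // Lr_mono.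
Qed.

Lemma mho_cat (u v : seq 'I_n) : mho kappa (u ++ v) = tmul (mho kappa u) (mho kappa v).
Proof.
elim: u => [|a u IH].
  by rewrite /= [mho _ v]mho_rep E_left.
rewrite cat_cons.
have E1 : forall x, mho kappa (a :: x) = tmul (Agen kappa a) (mho kappa x) by [].
by rewrite !E1 IH tmulA.
Qed.
End M.

Theorem mainTheorem7 (R : realFieldType) (n : nat) (kappa : R)
    (hn : (1 <= n)%N) (hk : (0 < kappa)%R) :
  (* mho is a monoid homomorphism with mho(e) = E *)
  mho kappa [::] = Etrop R n /\
  (forall u v : seq 'I_n, mho kappa (u ++ v) = tmul (mho kappa u) (mho kappa v)) /\
  (* main claim *)
  (forall u v : seq 'I_n, clk u v <-> mho kappa u = mho kappa v).
Proof.
split; first by [].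
split; first exact: mho_cat.
move=> u v; rewrite !(mho_rep hk); split.
  move=> H; apply/matrixP => t j; rewrite !mxE.
  case: leqP => // tj.
  by rewrite -!Lint_Lr H.
move=> e i j ij.
have := congr1 (fun M : 'M[trop R]_n => M i j) e; rewrite !mxE ij => -[h].
rewrite !Lint_Lr; apply: (mulrIn _ h).
by rewrite gt_eqF.
Qed.
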